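(* Let $0\ne f\in F(\mathfrak B)$ belong to an irreducible $GL$-submodule isomorphic to $W(\lambda_1,\lambda_2)$. Then for every partition $\mu=(\mu_1,\mu_2)$ with $\mu_2\ge\lambda_1$ and every admissible $j$ (i.e. $0\le j\le\mu_1-\mu_2$), the identity $w^{(j)}_\mu=0$ is a consequence of $f=0$, i.e. $w^{(j)}_\mu$ lies in the T-ideal of $F(\mathfrak B)$ generated by $f$. In particular $(y_1z_2-y_2z_1)^{\lambda_1}$ lies in this T-ideal.
   Context: $K$ is a field of characteristic $0$. $\mathfrak B$ is the variety of bicommutative algebras (identities $(x_1x_2)x_3=(x_1x_3)x_2$, $x_1(x_2x_3)=x_2(x_1x_3)$), with free algebra $F(\mathfrak B)$ on $x_1,x_2,\dots$; a T-ideal is a two-sided ideal closed under all algebra endomorphisms. The general linear groups act on $F_d(\mathfrak B)$ by extending the natural linear action on $\mathrm{span}(x_1,\dots,x_d)$ to automorphisms; $W(\lambda)$ is the irreducible polynomial module indexed by the partition $\lambda$. Model: with $K[Y,Z]$ the commutative polynomial ring in $y_1,y_2,\dots,z_1,z_2,\dots$, the algebra $G$ has basis $\{x_i\}\cup\{Y^\alpha Z^\beta:|\alpha|,|\beta|>0\}$ and multiplication $x_ix_j=y_iz_j$, $x_i\cdot(Y^\alpha Z^\beta)=y_iY^\alpha Z^\beta$, $(Y^\alpha Z^\beta)\cdot x_j=Y^\alpha Z^\beta z_j$, $(Y^\alpha Z^\beta)(Y^\gamma Z^\delta)=Y^{\alpha+\gamma}Z^{\beta+\delta}$; it is known that $x_i\mapsto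 x_i$ gives an isomorphism $F(\mathfrak B)\cong G$, so elements of $F(\mathfrak B)^2$ are written as polynomials in the $y_i,z_i$ (positive degree in both sets). For $\mu=(\mu_1,\mu_2)$ with $\mu_2>0$, $w^{(j)}_\mu=y_1^j(y_1z_2-y_2z_1)^{\mu_2}z_1^{\mu_1-\mu_2-j}$, $0\le j\le\mu_1-\mu_2$. *)

(* Defs.v *)
(* Model of the free bicommutative algebra F(B) via the
   algebra G of the paper. *)
From HB Require Import structures.
From mathcomp Require Import all_boot all_order all_algebra.
Set Implicit Arguments. Unset Strict Implicit. Unset Printing Implicit Defensive.
Import Order.TTheory GRing.Theory Num.Theory.
Local Open Scope ring_scope.

Inductive bterm (K : Type) : Type :=
| tVar of nat
| tZero
| tAdd of bterm K & bterm K
| tScale of K & bterm K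
| tMul of bterm K & bterm K.
Arguments tVar {K}.
Arguments tZero {K}.

Section Model.
Variable K : fieldType.

(* coefficient of x_j in (the image in G of) t *)
Fixpoint blin (t : bterm K) (j : nat) : K :=
  match t with
  | tVar i => (i == j)%:R
  | tZero => 0
  | tAdd a b => blin a j + blin b j
  | tScale c a => c * blin a j
  | tMul _ _ => 0
  end.

Fixpoint blinv (t : bterm K) (v : nat -> K) : K :=
  match t with
  | tVar i => v i
  | tZero => 0
  | tAdd a b => blinv a v + blinv b v
  | tScale c a => c * blinv a v
  | tMul _ _ => 0
  end.

(* the G^2-part of t, as a polynomial function of y = (y_i), z = (z_i);
   multiplication rule of G: x_i x_j = y_i z_j, x_i M = y_i M, M x_j = M z_j,
   M M' = M M', i.e. (l + P)(l' + P') = (l(y) + P)(l'(z) + P'). *)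
Fixpoint bpoly (t : bterm K) (y z : nat -> K) : K :=
  match t with
  | tVar _ => 0
  | tZero => 0
  | tAdd a b => bpoly a y z + bpoly b y z
  | tScale c a => c * bpoly a y z
  | tMul a b => (blinv a y + bpoly a y z) * (blinv b z + bpoly b y z)
  end.

(* equality in G (= F(B)); K is infinite, so polynomial functions are faithful *)
Definition beq (t s : bterm K) : Prop :=
  (forall j, blin t j = blin s j) /\ (forall y z, bpoly t y z = bpoly s y z).

Fixpoint bsubst (sigma : nat -> bterm K) (t : bterm K) : bterm K :=
  match t with
  | tVar i => sigma i
  | tZero => tZero
  | tAdd a b => tAdd (bsubst sigma a) (bsubst sigma b)
  | tScale c a => tScale c (bsubst sigma a)
  | tMul a b => tMul (bsubst sigma a) (bsubst sigma b)
  end.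

Inductive Tideal (f : bterm K) : bterm K -> Prop :=
| TI_sub sigma : Tideal f (bsubst sigma f)
| TI_zero : Tideal f tZero
| TI_add a b : Tideal f a -> Tideal f b -> Tideal f (tAdd a b)
| TI_scale c a : Tideal f a -> Tideal f (tScale c a)
| TI_mull a b : Tideal f b -> Tideal f (tMul a b)
| TI_mulr a b : Tideal f a -> Tideal f (tMul a b)
| TI_eq a b : Tideal f a -> beq a b -> Tideal f b.

Fixpoint bvars_lt (d : nat) (t : bterm K) : bool :=
  match t with
  | tVar i => (i < d)%N
  | tZero => true
  | tAdd a b => bvars_lt d a && bvars_lt d b
  | tScale _ a => bvars_lt d a
  | tMul a b => bvars_lt d a && bvars_lt d b
  end.

Definition inFd (d : nat) (t : bterm K) : Prop :=
  exists s, bvars_lt d s /\ beq s t.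

Definition glsub (d : nat) (g : 'M[K]_d) (j : nat) : bterm K :=
  match (insub j : option 'I_d) with
  | Some j' => \big[@tAdd K/tZero]_(i < d) tScale (g i j') (tVar i)
  | None => tVar j
  end.

Definition glact (d : nat) (g : 'M[K]_d) (t : bterm K) : bterm K :=
  bsubst (glsub g) t.

Definition GLsubmodule (d : nat) (M : bterm K -> Prop) : Prop :=
  [/\ (forall t s, M t -> beq t s -> M s),
      M tZero,
      (forall a b, M a -> M b -> M (tAdd a b)),
      (forall c a, M a -> M (tScale c a)) &
      (forall t, M t -> inFd d t) /\
      (forall (g : 'M[K]_d) t, g \in unitmx -> M t -> M (glact g t))].

Definition irreducible_GL (d : nat) (M : bterm K -> Prop) : Prop :=
  [/\ GLsubmodule d M,
      (exists t, M t /\ ~ beq t tZero) &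
      (forall N, GLsubmodule d N -> (forall t, N t -> M t) ->
         (forall t, N t -> beq t tZero) \/ (forall t, M t -> N t))].

Definition highest_weight_vector (d : nat) (lam : nat -> nat) (v : bterm K) :=
  [/\ ~ beq v tZero,
      (forall xi : 'rV[K]_d, (forall i, xi ord0 i != 0) ->
         beq (glact (diag_mx xi) v)
             (tScale (\prod_(i < d) xi ord0 i ^+ lam i) v)) &
      (forall g : 'M[K]_d, (forall i j : 'I_d, (j < i)%N -> g i j = 0) ->
         (forall i, g i i = 1) -> beq (glact g v) v)].

Definition part2 (l1 l2 : nat) (i : nat) : nat := nth 0%N [:: l1; l2] i.

Definition iso_W (d : nat) (M : bterm K -> Prop) (l1 l2 : nat) : Prop :=
  [/\ irreducible_GL d M,
      (forall i, (d <= i)%N -> part2 l1 l2 i = 0%N) &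
      exists v, M v /\ highest_weight_vector d (part2 l1 l2) v].

Definition in_Tideal_poly (f : bterm K) (w : (nat -> K) -> (nat -> K) -> K) :=
  exists t, [/\ Tideal f t, (forall i, blin t i = 0) &
                (forall y z, bpoly t y z = w y z)].

(* w^{(j)}_mu, with y_1,y_2,z_1,z_2 indexed 0,1 *)
Definition wmu (m1 m2 j : nat) (y z : nat -> K) : K :=
  y 0%N ^+ j * (y 0%N * z 1%N - y 1%N * z 0%N) ^+ m2 * z 0%N ^+ (m1 - m2 - j).

End Model.

(* Main.v *)
Require Import Defs.
From HB Require Import structures.
From mathcomp Require Import all_boot all_order all_algebra.
From mathcomp Require Import ring zify.
From Stdlib Require Import FunctionalExtensionality Classical.
Set Implicit Arguments. Unset Strict Implicit. Unset Printing Implicit Defensive.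
Import GRing.Theory.
Local Open Scope ring_scope.

Section P.
Variable K : fieldType.
Implicit Types (f t s a b : bterm K) (y z w : nat -> K).

Lemma blinvD t v1 v2 : blinv t (fun i => v1 i + v2 i) = blinv t v1 + blinv t v2.
Proof.
elim: t => //= [|a IHa b IHb|c a IH|a _ b _]; first by rewrite addr0.
- by rewrite IHa IHb; ring.
- by rewrite IH mulrDr.
- by rewrite addr0.
Qed.

Lemma blinvZ t c v : blinv t (fun i => c * v i) = c * blinv t v.
Proof.
elim: t => //= [|a IHa b IHb|c' a IH|a _ b _]; first by rewrite mulr0.
- by rewrite IHa IHb mulrDr.
- by rewrite IH; ring.
- by rewrite mulr0.
Qed.

Lemma blinv0 t : blinv t (fun _ => 0) = 0.
Proof.
have -> : (fun _ : nat => (0:K)) = (fun i => 0 * (0:K)) by apply: functional_extensionality => i; rewrite mulr0.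
by rewrite blinvZ mul0r.
Qed.

Lemma blin_blinv t j : blin t j = blinv t (fun i => (i == j)%:R).
Proof. by elim: t => //= [a -> b ->|c a ->]. Qed.

Fixpoint bmax t : nat :=
  match t with
  | tVar i => i.+1
  | tZero => 0
  | tAdd a b => maxn (bmax a) (bmax b)
  | tScale _ a => bmax a
  | tMul _ _ => 0
  end.

Lemma blinv_sum t n w : (bmax t <= n)%N -> blinv t w = \sum_(i < n) blin t i * w i.
Proof.
elim: t => /= [i||a IHa b IHb|c a IH|a _ b _] hn.
- rewrite (bigD1 (Ordinal hn)) //= eqxx mul1r big1 ?addr0 //.
  by move=> k /negbTE hk; rewrite eq_sym -(inj_eq val_inj) /= in hk; rewrite hk mul0r.
- by rewrite big1 // => i _; rewrite mul0r.
- rewrite geq_max in hn; case/andP: hn => h1 h2.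
  by rewrite IHa // IHb // -big_split /=; apply: eq_bigr => i _; rewrite mulrDl.
- by rewrite IH // mulr_sumr; apply: eq_bigr => i _; rewrite mulrA.
- by rewrite big1 // => i _; rewrite mul0r.
Qed.

Lemma blinv_beq t s w : (forall j, blin t j = blin s j) -> blinv t w = blinv s w.
Proof.
move=> h; rewrite (@blinv_sum t (maxn (bmax t) (bmax s))) ?leq_maxl //.
rewrite (@blinv_sum s (maxn (bmax t) (bmax s))) ?leq_maxr //.
by apply: eq_bigr => i _; rewrite h.
Qed.

Lemma blinv_zero t w : (forall j, blin t j = 0) -> blinv t w = 0.
Proof.
move=> h; rewrite (@blinv_sum t (bmax t)) // big1 // => i _; by rewrite h mul0r.
Qed.

Lemma blinv_subst sg t w : blinv (bsubst sg t) w = blinv t (fun i => blinv (sg i) w).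
Proof. by elim: t => //= [a -> b ->|c a ->]. Qed.

Lemma bpoly_subst sg t y z :
  bpoly (bsubst sg t) y z =
  bpoly t (fun i => blinv (sg i) y + bpoly (sg i) y z)
          (fun i => blinv (sg i) z + bpoly (sg i) y z)
  + blinv t (fun i => bpoly (sg i) y z).
Proof.
elim: t => /= [i||a IHa b IHb|c a IH|a IHa b IHb].
- by rewrite add0r.
- by rewrite addr0.
- by rewrite IHa IHb; ring.
- by rewrite IH mulrDr.
- rewrite !blinv_subst IHa IHb !blinvD addr0; ring.
Qed.

Lemma beq_subst sg t s : beq t s -> beq (bsubst sg t) (bsubst sg s).
Proof.
case=> h1 h2; split=> [j|y z].
- by rewrite !blin_blinv !blinv_subst; apply: blinv_beq.
- by rewrite !bpoly_subst h2 (blinv_beq _ h1).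
Qed.

Lemma bsubst_comp sg tau t : bsubst sg (bsubst tau t) = bsubst (fun i => bsubst sg (tau i)) t.
Proof. by elim: t => //= [a -> b ->|c a ->|a -> b ->]. Qed.

Lemma bsubst_id t : bsubst (fun i => tVar i) t = t.
Proof. by elim: t => //= [a -> b ->|c a ->|a -> b ->]. Qed.

Lemma Tideal_subst f sg t : Tideal f t -> Tideal f (bsubst sg t).
Proof.
elim=> /=.
- by move=> tau; rewrite bsubst_comp; apply: TI_sub.
- exact: TI_zero.
- by move=> a b _ ha _ hb; apply: TI_add.
- by move=> c a _ ha; apply: TI_scale.
- by move=> a b _ hb; apply: TI_mull.
- by move=> a b _ ha; apply: TI_mulr.
- by move=> a b _ ha hab; apply: TI_eq ha _; apply: beq_subst.
Qed.

Lemma Tideal_self f : Tideal f f.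
Proof. by have := @TI_sub K f (fun i => tVar i); rewrite bsubst_id. Qed.


Lemma bvars_blinv d s w w' : bvars_lt d s ->
  (forall i, (i < d)%N -> w i = w' i) -> blinv s w = blinv s w'.
Proof.
move=> hs hw; elim: s hs => /= [i hi||a IHa b IHb /andP[ha hb]|c a IH ha|a _ b _ _] //.
- by rewrite hw.
- by rewrite IHa // IHb.
- by rewrite IH.
Qed.

Lemma bvars_bpoly d s y y' z z' : bvars_lt d s ->
  (forall i, (i < d)%N -> y i = y' i) -> (forall i, (i < d)%N -> z i = z' i) ->
  bpoly s y z = bpoly s y' z'.
Proof.
move=> hs hy hz; elim: s hs => /= [i _||a IHa b IHb /andP[ha hb]|c a IH ha|a IHa b IHb /andP[ha hb]] //.
- by rewrite IHa // IHb.
- by rewrite IH.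
- by rewrite IHa // IHb // (bvars_blinv ha hy) (bvars_blinv hb hz).
Qed.

Lemma bvars_blin d s j : bvars_lt d s -> (d <= j)%N -> blin s j = 0.
Proof.
move=> hs hj; elim: s hs => /= [i hi||a IHa b IHb /andP[ha hb]|c a IH ha|a _ b _ _] //.
- by have -> : (i == j) = false by apply/negbTE; rewrite neq_ltn (leq_trans hi hj).
- by rewrite IHa // IHb // addr0.
- by rewrite IH // mulr0.
Qed.

Lemma bpoly_lsubst sg t y z : (forall i y z, bpoly (sg i) y z = 0) ->
  bpoly (bsubst sg t) y z = bpoly t (fun i => blinv (sg i) y) (fun i => blinv (sg i) z).
Proof.
move=> h; rewrite bpoly_subst.
have -> : (fun i => bpoly (sg i) y z) = (fun _ => 0) by apply: functional_extensionality => i; rewrite h.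
rewrite blinv0 addr0; congr bpoly; apply: functional_extensionality => i; by rewrite h addr0.
Qed.

Definition gvec d (g : 'M[K]_d) w j : K :=
  match (insub j : option 'I_d) with
  | Some j' => \sum_(i < d) g i j' * w i
  | None => w j
  end.

Lemma glsub_blinv d (g : 'M[K]_d) j w : blinv (glsub g j) w = gvec g w j.
Proof.
rewrite /glsub /gvec; case: insub => [j'|] //=.
rewrite (big_morph (fun t => blinv t w) (id1 := 0) (op1 := +%R)) //.
Qed.

Lemma glsub_bpoly d (g : 'M[K]_d) j y z : bpoly (glsub g j) y z = 0.
Proof.
rewrite /glsub; case: insub => [j'|] //=.
rewrite (big_morph (fun t => bpoly t y z) (id1 := 0) (op1 := +%R)) //.
by rewrite big1 // => i _ /=; rewrite mulr0.
Qed.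

Lemma glact_bpoly d (g : 'M[K]_d) t y z :
  bpoly (glact g t) y z = bpoly t (gvec g y) (gvec g z).
Proof.
rewrite /glact bpoly_lsubst; last by move=> *; apply: glsub_bpoly.
by congr bpoly; apply: functional_extensionality => i; rewrite glsub_blinv.
Qed.

Lemma glact_blin d (g : 'M[K]_d) t j :
  blin (glact g t) j = blinv t (gvec g (fun k => (k == j)%:R)).
Proof.
rewrite blin_blinv /glact blinv_subst; congr blinv; apply: functional_extensionality => i.
by rewrite glsub_blinv.
Qed.

Definition line y y' (r : K) := fun i => y i + r * y' i.

Lemma blinv_line t y y' r : blinv t (line y y' r) = blinv t y + r * blinv t y'.
Proof. by rewrite /line blinvD blinvZ. Qed.

Lemma bpoly_line t y y' z z' : exists p : {poly K}, forall r,
  bpoly t (line y y' r) (line z z' r) = p.[r].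
Proof.
elim: t => /= [i||a [pa ha] b [pb hb]|c a [pa ha]|a [pa ha] b [pb hb]].
- by exists 0 => r; rewrite horner0.
- by exists 0 => r; rewrite horner0.
- by exists (pa + pb) => r; rewrite ha hb hornerD.
- by exists (c *: pa) => r; rewrite ha hornerZ.
- exists (((blinv a y)%:P + blinv a y' *: 'X + pa) * ((blinv b z)%:P + blinv b z' *: 'X + pb)) => r.
  by rewrite !blinv_line ha hb !(hornerM, hornerD, hornerZ, hornerX, hornerC); congr (_ * _); ring.
Qed.

Lemma bpoly_scale2 t y z : exists p : {poly K}, forall r,
  bpoly t (fun i => r * y i) (fun i => r * z i) = r ^+ 2 * p.[r].
Proof.
elim: t => /= [i||a [pa ha] b [pb hb]|c a [pa ha]|a [pa ha] b [pb hb]].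
- by exists 0 => r; rewrite horner0 mulr0.
- by exists 0 => r; rewrite horner0 mulr0.
- by exists (pa + pb) => r; rewrite ha hb hornerD mulrDr.
- by exists (c *: pa) => r; rewrite ha hornerZ; ring.
- exists (((blinv a y)%:P + 'X * pa) * ((blinv b z)%:P + 'X * pb)) => r.
  rewrite !blinvZ ha hb !(hornerM, hornerD, hornerZ, hornerX, hornerC); ring.
Qed.

Section Char0.
Hypothesis Kc : [pchar K] =i pred0.

Lemma natK_eq0 n : ((n%:R : K) == 0) = (n == 0)%N.
Proof. by move/pcharf0P: Kc => ->. Qed.

Lemma natK_inj m n : (m%:R : K) = n%:R -> m = n.
Proof.
wlog h : m n / (m <= n)%N => [H e|].
  by case/orP: (leq_total m n) => h'; [apply: H | apply/esym/H].
move=> e; have : ((n - m)%:R : K) == 0 by rewrite natrB // e subrr.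
by rewrite natK_eq0 subn_eq0 => h2; apply/eqP; rewrite eqn_leq h h2.
Qed.

Lemma poly_nz_eq (p q : {poly K}) : (forall r, r != 0 -> p.[r] = q.[r]) -> p = q.
Proof.
move=> h; apply/eqP; rewrite -subr_eq0; apply/negPn/negP => hne.
set rs := [seq (i.+1)%:R : K | i <- iota 0 (size (p - q))].
have h1 : all (root (p - q)) rs.
  apply/allP => x /mapP [i _ ->]; rewrite /root hornerD hornerN h ?subrr //.
  by rewrite natK_eq0.
have h2 : uniq rs by rewrite map_inj_uniq ?iota_uniq // => i j /natK_inj; case.
by have := max_poly_roots hne h1 h2; rewrite size_map size_iota ltnn.
Qed.

Lemma exists_nonroot (p : {poly K}) (be : K) : p != 0 ->
  exists r, [/\ r != be, r != 0 & p.[r] != 0].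
Proof.
move=> hp; apply: NNPP => hn.
have : p * ('X - be%:P) = 0.
  apply: poly_nz_eq => r hr; rewrite horner0 hornerM hornerD hornerN hornerX hornerC.
  case: (eqVneq r be) => [->|hb]; first by rewrite subrr mulr0.
  case: (eqVneq p.[r] 0) => [->|hpr]; first by rewrite mul0r.
  by exfalso; apply: hn; exists r.
move/eqP; rewrite mulf_eq0 (negbTE hp) /= => /eqP h.
by have := size_XsubC be; rewrite h size_poly0.
Qed.

End Char0.


Definition dsc d (xi : 'rV[K]_d) w : nat -> K := fun j =>
  match (insub j : option 'I_d) with Some j' => xi ord0 j' * w j | None => w j end.

Lemma gvec_diag d (xi : 'rV[K]_d) w : gvec (diag_mx xi) w = dsc xi w.
Proof.
apply: functional_extensionality => j; rewrite /gvec /dsc; case: insubP => [j' _ <-|_] //.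
rewrite (bigD1 j') //= big1 ?addr0; first by rewrite mxE eqxx mulr1n.
by move=> i hi; rewrite mxE (negbTE hi) mulr0n mul0r.
Qed.

Definition ushift (s : K) w : nat -> K := fun j => if j == 1%N then w 1%N + s * w 0%N else w j.

Definition Umat d (s : K) : 'M[K]_d :=
  \matrix_(i, j) ((i == j)%:R + ((nat_of_ord i == 0%N) && (nat_of_ord j == 1%N))%:R * s).

Lemma gvec_U d (s : K) w : (1 < d)%N -> gvec (Umat d s) w = ushift s w.
Proof.
move=> hd; apply: functional_extensionality => j; rewrite /gvec /ushift.
case: insubP => [j' _ <-|hj]; last first.
  by case: eqP => // ej; rewrite ej hd in hj.
rewrite (eq_bigr (fun i : 'I_d => (i == j')%:R * w i +
   ((nat_of_ord i == 0%N) && (nat_of_ord j' == 1%N))%:R * s * w i)); last first.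
  by move=> i _; rewrite mxE mulrDl.
rewrite big_split /= (bigD1 j') //= eqxx mul1r big1 ?addr0; last first.
  by move=> i hi; rewrite (negbTE hi) mul0r.
case: eqP => ej1; last first.
  by rewrite big1 ?addr0 // => i _; rewrite andbF mul0r mul0r.
have h0 : (0 < d)%N by apply: ltn_trans hd.
rewrite (bigD1 (Ordinal h0)) //= big1 ?addr0.
- by rewrite ej1 mul1r.
- move=> i hi; have : nat_of_ord i != 0%N.
    by apply: contra hi => /eqP hi0; apply/eqP/val_inj.
  by move/negbTE => ->; rewrite mul0r mul0r.
Qed.

Definition mk (a b : K) : nat -> K := fun i => if i == 0%N then a else if i == 1%N then b else 0.

End P.

Section L.
Variable K : fieldType.
Hypothesis Kc : [pchar K] =i pred0.

Lemma size_sum_le (r : seq nat) (G : nat -> {poly K}) k :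
  (forall i, i \in r -> (size (G i) <= k)%N) -> (size (\sum_(i <- r) G i)%R <= k)%N.
Proof.
elim: r => [|i r IH] h; first by rewrite big_nil size_poly0.
rewrite big_cons; apply: leq_trans (size_polyD _ _) _; rewrite geq_max h ?mem_head //.
by apply: IH => j hj; apply: h; rewrite in_cons hj orbT.
Qed.

Lemma size_prod_le (r : seq nat) (P : pred nat) (f : nat -> {poly K}) :
  (forall i, (size (f i) <= 2)%N) -> (size (\prod_(i <- r | P i) f i)%R <= (count P r).+1)%N.
Proof.
move=> h; elim: r => [|i r IH]; first by rewrite big_nil size_poly1.
rewrite big_cons /=; case: (P i) => /=; last by rewrite add0n.
apply: leq_trans (size_polyMleq _ _) _.
by move: (h i) IH; rewrite /=; lia.
Qed.

Lemma natK_neq m n : m <> n -> (m%:R - n%:R : K) != 0.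
Proof. by move=> h; rewrite subr_eq0; apply/eqP => /(natK_inj Kc). Qed.

Definition lagr n (x : K) m := \prod_(j <- iota 0 n.+1 | j != m) ((x - j%:R) / (m%:R - j%:R)).

Lemma lagr_node n k m : (k < n.+1)%N -> (m < n.+1)%N ->
  lagr n k%:R m = (k == m)%:R.
Proof.
move=> hk hm; rewrite /lagr; case: eqP => [->|hkm].
  rewrite big1_seq // => j /andP [hj _]; rewrite divff //.
  by apply: natK_neq => e; rewrite e eqxx in hj.
rewrite (big_rem k) ?mem_iota ?add0n //=; case: eqP => // _.
by rewrite subrr mul0r mul0r.
Qed.

Lemma lagrange n (Gp : {poly K}) : (size Gp <= n.+1)%N ->
  forall x, Gp.[x] = \sum_(m <- iota 0 n.+1) Gp.[m%:R] * lagr n x m.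
Proof.
move=> hs.
set Lp := \sum_(m <- iota 0 n.+1) Gp.[m%:R] *:
   \prod_(j <- iota 0 n.+1 | j != m) (('X - (j%:R)%:P) * ((m%:R - j%:R)^-1)%:P).
have hL : forall x, Lp.[x] = \sum_(m <- iota 0 n.+1) Gp.[m%:R] * lagr n x m.
  move=> x; rewrite horner_sum; apply: eq_bigr => m _.
  rewrite hornerZ horner_prod /lagr; congr (_ * _); apply: eq_bigr => j _.
  by rewrite hornerM hornerD hornerN hornerX !hornerC.
suff e : Gp = Lp by move=> x; rewrite -hL {1}e.
apply/eqP; rewrite -subr_eq0; apply/negPn/negP => hne.
set rs := [seq (i%:R : K) | i <- iota 0 n.+1].
have h1 : all (root (Gp - Lp)) rs.
  apply/allP => x /mapP [k hk ->]; rewrite /root hornerD hornerN hL.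
  rewrite mem_iota add0n in hk.
  rewrite (bigD1_seq k) ?mem_iota ?iota_uniq // lagr_node // eqxx mulr1.
  rewrite big1_seq => [|m /andP [hmk hm]]; first by rewrite /= addr0 subrr.
  rewrite mem_iota add0n in hm.
  by rewrite lagr_node // eq_sym (negbTE hmk) mulr0.
have h2 : uniq rs by rewrite map_inj_uniq ?iota_uniq // => i j /(natK_inj Kc).
have := max_poly_roots hne h1 h2; rewrite size_map size_iota.
have : (size (Gp - Lp)%R <= n.+1)%N.
  apply: leq_trans (size_polyD _ _) _; rewrite size_polyN geq_max hs /=.
  apply: size_sum_le => m hm; apply: leq_trans (size_scale_leq _ _) _.
  have e : count (fun j => j != m) (iota 0 n.+1) = n.
    have := count_predC (pred1 m) (iota 0 n.+1).
    by rewrite count_uniq_mem ?iota_uniq // hm size_iota add1n => [[]].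
  apply: leq_trans (size_prod_le _ _ _) _; last by rewrite e.
  move=> i; apply: leq_trans (size_polyMleq _ _) _.
  by rewrite size_XsubC size_polyC; case: (_ != 0).
by move=> a b; have := leq_ltn_trans a b; rewrite ltnn.
Qed.


Lemma two_neq0 : (2 : K) != 0.
Proof. by rewrite -[2]/(2%:R) natK_eq0. Qed.

Section Alg.
Variable F : K -> K -> K -> K -> K.
Variables l1 l2 : nat.
Hypothesis hl : (l2 <= l1)%N.
Hypothesis hl1 : (0 < l1)%N.
Hypothesis H1 : forall r a b c e, r != 0 -> F (r * a) b (r * c) e = r ^+ l1 * F a b c e.
Hypothesis H2 : forall r a b c e, r != 0 -> F a (r * b) c (r * e) = r ^+ l2 * F a b c e.
Hypothesis H3 : forall s a b c e, F a (b + s * a) c (e + s * c) = F a b c e.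
Hypothesis Fline : forall a b c e a' b' c' e', exists p : {poly K}, forall x,
  F (a + x * a') (b + x * b') (c + x * c') (e + x * e') = p.[x].

Lemma F0 b e : F 0 b 0 e = 0.
Proof.
have := H1 0 b 0 e two_neq0; rewrite !mulr0 => h.
have h2 : (2 : K) ^+ l1 != 1.
  rewrite -[2]/(2%:R) -natrX -[1]/(1%:R); apply/eqP => /(natK_inj Kc).
  by case: l1 hl1 => // k _; rewrite expnS; lia.
have : (1 - 2 ^+ l1) * F 0 b 0 e = 0 by rewrite mulrBl mul1r -h subrr.
by move/eqP; rewrite mulf_eq0 subr_eq0 eq_sym (negbTE h2) /= => /eqP.
Qed.

Lemma degG a b c e : exists Gp : {poly K}, (size Gp <= (l1 - l2).+1)%N /\
  forall x, Gp.[x] = F (a + x * b) b (c + x * e) e.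
Proof.
set n := (l1 - l2)%N.
have [Gp hG] := Fline a b c e b 0 e 0.
have [Qp hQ] := Fline b a e c a 0 c 0.
exists Gp; split; last by move=> x; rewrite -hG !mulr0 !addr0.
have key : forall x, x != 0 -> Gp.[x] = (-1) ^+ l2 * x ^+ n * Qp.[x^-1].
  move=> x hx; rewrite -hG -hQ !mulr0 !addr0.
  have e1 : F (a + x * b) b (c + x * e) e = F (a + x * b) ((- x^-1) * a) (c + x * e) ((- x^-1) * c).
    rewrite -(H3 (- x^-1) (a + x * b) b (c + x * e) e); congr F; field; exact: hx.
  rewrite e1 H2 ?oppr_eq0 ?invr_eq0 //.
  have e2 : F (a + x * b) a (c + x * e) c = x ^+ l1 * F (b + x^-1 * a) a (e + x^-1 * c) c.
    rewrite -H1 //; congr F; field; exact: hx.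
  rewrite e2.
  have hl1e : l1 = (n + l2)%N by rewrite subnK.
  rewrite hl1e exprD (exprNn x^-1) exprVn.
  have hxl : x ^+ l2 != 0 by apply: expf_neq0.
  field; exact: hxl.
set N := size Qp.
set R := \poly_(i < N.+1) Qp`_(N - i).
have hR : forall x, x != 0 -> R.[x] = x ^+ N * Qp.[x^-1].
  move=> x hx; rewrite horner_poly (@horner_coef_wide _ N.+1) // mulr_sumr.
  rewrite [RHS](reindex_inj rev_ord_inj); apply: eq_bigr => i _ /=.
  rewrite subSS exprVn mulrCA; congr (_ * _).
  have hi : (i <= N)%N by rewrite -ltnS.
  have -> : x ^+ N = x ^+ i * x ^+ (N - i) by rewrite -exprD subnKC.
  by rewrite mulfK //; apply: expf_neq0.
have epoly : 'X^N * Gp = ((-1) ^+ l2) *: ('X^n * R).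
  apply: (poly_nz_eq Kc) => x hx.
  rewrite hornerZ !hornerM !hornerXn key // hR //; ring.
case: (eqVneq Gp 0) => [->|hG0]; first by rewrite size_poly0.
have := size_scale_leq ((-1) ^+ l2) ('X^n * R); rewrite -epoly mulrC size_mulXn //.
move=> h; have := leq_trans h (size_polyMleq _ _); rewrite size_polyXn.
have := size_poly N.+1 (fun i => Qp`_(N - i)); rewrite -/R.
move=> h1 h2; rewrite addSn /= in h2.
move: h1 h2; set u := size R; set g := size Gp; clearbody n; lia.
Qed.

Lemma prodlin n m (N D : K) : D != 0 -> (m < n.+1)%N ->
  \prod_(j <- iota 0 n.+1 | j != m) ((N - j%:R * D) / (m%:R - j%:R)) = D ^+ n * lagr n (N / D) m.
Proof.
move=> hD hm; rewrite /lagr.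
rewrite (eq_bigr (fun j => D * ((N / D - j%:R) / (m%:R - j%:R)))); last first.
  move=> j hj; have hmj : (m%:R - j%:R : K) != 0.
    by apply: natK_neq => ej; rewrite ej eqxx in hj.
  by field; rewrite hmj hD.
rewrite big_split /= big_const_seq iter_mulr_1; congr (_ ^+ _ * _).
have := count_predC (pred1 m) (iota 0 n.+1).
rewrite count_uniq_mem ?iota_uniq ?mem_iota ?add0n // hm size_iota add1n => [[]] //.
Qed.

Lemma main_id (p q a b c e : K) : p != 0 -> (b * q - e * p) != 0 ->
  \sum_(m <- iota 0 (l1 - l2).+1)
     (\prod_(j <- iota 0 (l1 - l2).+1 | j != m)
        (((c * p - a * q) - j%:R * (b * q - e * p)) / (m%:R - j%:R))) *
     F (a + m%:R * b) b (c + m%:R * e) e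
  = (-1) ^+ (l1 + l2) * F p 0 q p^-1 * (a * e - b * c) ^+ l1.
Proof.
set n := (l1 - l2)%N; set N := c * p - a * q; set D := b * q - e * p; set Dl := a * e - b * c.
move=> hp hD.
have [Gp [hs hG]] := degG a b c e.
transitivity (D ^+ n * Gp.[N / D]).
  rewrite (lagrange hs) mulr_sumr !big_seq; apply: eq_bigr => m hm.
  rewrite mem_iota add0n in hm.
  rewrite prodlin // -hG; ring.
rewrite hG.
have eA : a + N / D * b = (- Dl / D) * p by rewrite /N /Dl /D; field; exact: hD.
have eC : c + N / D * e = (- Dl / D) * q by rewrite /N /Dl /D; field; exact: hD.
rewrite eA eC.
case: (eqVneq Dl 0) => [->|hDl].
  by rewrite oppr0 !mul0r F0 expr0n gtn_eqF // !mulr0.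
rewrite H1; last by rewrite mulf_neq0 ?oppr_eq0 ?invr_eq0.
have e3 : F p b q e = F p ((- D) * 0) q ((- D) * p^-1).
  rewrite -[RHS](H3 (b / p)); congr F; rewrite /D; field; by rewrite ?hp.
rewrite e3 H2 ?oppr_eq0 //.
have eD : D ^+ l1 = D ^+ n * D ^+ l2 by rewrite -exprD /n subnK.
rewrite exprMn (exprNn Dl) (exprNn D) exprVn eD exprD.
have hn : D ^+ n != 0 by apply: expf_neq0.
have hn2 : D ^+ l2 != 0 by apply: expf_neq0.
field; by rewrite hn hn2.
Qed.

Lemma nonvan a b c e : F a b c e != 0 -> exists p q, p != 0 /\ F p 0 q p^-1 != 0.
Proof.
move=> h.
have [P1 hP1] := Fline a b c e 1 0 0 0.
have hP10 : P1 != 0.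
  apply: contraNneq h => e0.
  by have := hP1 0; rewrite !mul0r !addr0 e0 horner0 => ->.
have [r [hra hr0 hPr]] := exists_nonroot Kc (-a) hP10.
rewrite -hP1 !mulr0 !addr0 mulr1 in hPr.
set a' := a + r in hPr.
have ha' : a' != 0 by rewrite /a' addrC addr_eq0.
set w := e - b * c / a'.
have e2 : F a' b c e = F a' 0 c w.
  by rewrite -[RHS](H3 (b / a')); congr F; rewrite /w; field; rewrite ?ha'.
rewrite e2 in hPr.
have [P2 hP2] := Fline a' 0 c w 0 0 0 1.
have hP20 : P2 != 0.
  apply: contraNneq hPr => e0.
  have := hP2 0; rewrite !mul0r !addr0 e0 horner0 => ->; by [].
have [r2 [hrw hr20 hPr2]] := exists_nonroot Kc (-w) hP20.
rewrite -hP2 !mulr0 !addr0 mulr1 in hPr2.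
have hw' : w + r2 != 0 by rewrite addrC addr_eq0.
exists a', c; split => //.
have e4 : F a' 0 c (w + r2) = F a' ((a' * (w + r2)) * 0) c ((a' * (w + r2)) * a'^-1).
  by congr F; [rewrite mulr0 | field; rewrite ?ha'].
rewrite e4 H2 in hPr2; last by rewrite mulf_neq0.
by apply: contraNneq hPr2 => ->; rewrite mulr0.
Qed.

End Alg.

End L.

Section I.
Variable K : fieldType.
Variable f : bterm K.
Notation I := (in_Tideal_poly f).
Implicit Types (Q R : (nat -> K) -> (nat -> K) -> K).

Lemma I_ext Q R : (forall y z, Q y z = R y z) -> I Q -> I R.
Proof. by move=> h [t [h1 h2 h3]]; exists t; split=> // y z; rewrite h3. Qed.

Lemma I_term t : Tideal f t -> (forall j, blin t j = 0) -> I (bpoly t).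
Proof. by move=> h1 h2; exists t; split. Qed.

Lemma I_zero : I (fun _ _ => 0).
Proof. by exists tZero; split=> //; exact: TI_zero. Qed.

Lemma I_add Q R : I Q -> I R -> I (fun y z => Q y z + R y z).
Proof.
move=> [t [h1 h2 h3]] [s [g1 g2 g3]]; exists (tAdd t s); split => /=.
- exact: TI_add.
- by move=> i; rewrite h2 g2 addr0.
- by move=> y z; rewrite h3 g3.
Qed.

Lemma I_scale c Q : I Q -> I (fun y z => c * Q y z).
Proof.
move=> [t [h1 h2 h3]]; exists (tScale c t); split => /=.
- exact: TI_scale.
- by move=> i; rewrite h2 mulr0.
- by move=> y z; rewrite h3.
Qed.

Lemma I_muly k Q : I Q -> I (fun y z => y k * Q y z).
Proof.
move=> [t [h1 h2 h3]]; exists (tMul (tVar k) t); split => //=.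
- exact: TI_mull.
- by move=> y z; rewrite h3 (blinv_zero _ h2) !add0r addr0.
Qed.

Lemma I_mulz k Q : I Q -> I (fun y z => z k * Q y z).
Proof.
move=> [t [h1 h2 h3]]; exists (tMul t (tVar k)); split => //=.
- exact: TI_mulr.
- by move=> y z; rewrite h3 (blinv_zero _ h2) !add0r addr0 mulrC.
Qed.

Definition islin (L : (nat -> K) -> (nat -> K) -> K) :=
  exists A B C E, forall y z, L y z = A * y 0%N + B * y 1%N + C * z 0%N + E * z 1%N.

Lemma I_lin L Q : islin L -> I Q -> I (fun y z => L y z * Q y z).
Proof.
move=> [A [B [C [E hL]]]] hQ.
apply: (I_ext (Q := fun y z => A * (y 0%N * Q y z) + B * (y 1%N * Q y z) + C * (z 0%N * Q y z) + E * (z 1%N * Q y z))).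
  by move=> y z; rewrite hL; ring.
by apply: I_add; [apply: I_add; [apply: I_add|]|]; apply: I_scale;
  (apply: I_muly || apply: I_mulz).
Qed.

Lemma I_prod (r : seq nat) (P : pred nat) (L : nat -> (nat -> K) -> (nat -> K) -> K) Q :
  (forall j, islin (L j)) -> I Q -> I (fun y z => (\prod_(j <- r | P j) L j y z) * Q y z).
Proof.
move=> hL hQ; elim: r => [|j r IH].
  by apply: I_ext hQ => y z; rewrite big_nil mul1r.
case hj : (P j).
  apply: I_ext (I_lin (hL j) IH) => y z; by rewrite big_cons hj mulrA.
by apply: I_ext IH => y z; rewrite big_cons hj.
Qed.

Lemma I_sum (r : seq nat) (R : nat -> (nat -> K) -> (nat -> K) -> K) :
  (forall m, m \in r -> I (R m)) -> I (fun y z => \sum_(m <- r) R m y z).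
Proof.
elim: r => [|m r IH] h.
  by apply: I_ext I_zero => y z; rewrite big_nil.
apply: I_ext (I_add (h m (mem_head _ _)) (IH _)) => [y z|]; first by rewrite big_cons.
by move=> k hk; apply: h; rewrite in_cons hk orbT.
Qed.

End I.

Section PF.
Variable K : fieldType.
Definition polyfun (phi : K -> K) := exists p : {poly K}, forall r, phi r = p.[r].

Lemma pf_const c : polyfun (fun _ => c).
Proof. by exists c%:P => r; rewrite hornerC. Qed.

Lemma pf_lin a b : polyfun (fun r => a + r * b).
Proof. by exists (a%:P + b *: 'X) => r; rewrite hornerD hornerZ hornerX hornerC mulrC. Qed.

Lemma pf_add p1 p2 : polyfun p1 -> polyfun p2 -> polyfun (fun r => p1 r + p2 r).
Proof. by move=> [q1 h1] [q2 h2]; exists (q1 + q2) => r; rewrite h1 h2 hornerD. Qed.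

Lemma pf_mul p1 p2 : polyfun p1 -> polyfun p2 -> polyfun (fun r => p1 r * p2 r).
Proof. by move=> [q1 h1] [q2 h2]; exists (q1 * q2) => r; rewrite h1 h2 hornerM. Qed.

Lemma pf_ext p1 p2 : (forall r, p1 r = p2 r) -> polyfun p1 -> polyfun p2.
Proof. by move=> h [q h1]; exists q => r; rewrite -h. Qed.

Lemma pf_sum (s : seq nat) (ph : nat -> K -> K) :
  (forall m, polyfun (ph m)) -> polyfun (fun r => \sum_(m <- s) ph m r).
Proof.
move=> h; elim: s => [|m s IH].
  by apply: pf_ext (pf_const 0) => r; rewrite big_nil.
by apply: pf_ext (pf_add (h m) IH) => r; rewrite big_cons.
Qed.

Lemma pf_prod (s : seq nat) (P : pred nat) (ph : nat -> K -> K) :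
  (forall m, polyfun (ph m)) -> polyfun (fun r => \prod_(m <- s | P m) ph m r).
Proof.
move=> h; elim: s => [|m s IH].
  by apply: pf_ext (pf_const 1) => r; rewrite big_nil.
case hm : (P m).
  by apply: pf_ext (pf_mul (h m) IH) => r; rewrite big_cons hm.
by apply: pf_ext IH => r; rewrite big_cons hm.
Qed.

Lemma pf_exp p1 k : polyfun p1 -> polyfun (fun r => p1 r ^+ k).
Proof.
move=> h; elim: k => [|k IH].
  by apply: pf_ext (pf_const 1) => r; rewrite expr0.
by apply: pf_ext (pf_mul h IH) => r; rewrite exprS.
Qed.

End PF.

Section Main.
Variable K : fieldType.
Implicit Types (t s a b : bterm K) (y z w : nat -> K).
Section HW.
Hypothesis Kc : [pchar K] =i pred0.
Variables (d : nat) (v : bterm K) (l1 l2 : nat).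
Hypothesis hpart : forall i, (d <= i)%N -> part2 l1 l2 i = 0%N.
Hypothesis hv : highest_weight_vector d (part2 l1 l2) v.
Hypothesis hFd : inFd d v.
Hypothesis hd : (0 < d)%N.

Definition P y z := bpoly v y z.
Definition F (a b c e : K) := P (mk a b) (mk c e).

Lemma P_ind y y' z z' : (forall i, (i < d)%N -> y i = y' i) ->
  (forall i, (i < d)%N -> z i = z' i) -> P y z = P y' z'.
Proof.
move=> hy hz; case: hFd => s [hs [_ e]]; rewrite /P -!e.
exact: bvars_bpoly hy hz.
Qed.

Lemma blin_v_out j : (d <= j)%N -> blin v j = 0.
Proof. by move=> hj; case: hFd => s [hs [e _]]; rewrite -e (bvars_blin hs hj). Qed.

Lemma wt (xi : 'rV[K]_d) y z : (forall i, xi ord0 i != 0) ->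
  P (dsc xi y) (dsc xi z) = (\prod_(i < d) xi ord0 i ^+ part2 l1 l2 i) * P y z.
Proof.
move=> hxi; case: hv => _ hw _; case: (hw xi hxi) => _ h2.
by have := h2 y z; rewrite glact_bpoly !gvec_diag.
Qed.

Lemma wt_blin (xi : 'rV[K]_d) j : (forall i, xi ord0 i != 0) ->
  blinv v (dsc xi (fun k => (k == j)%:R)) = (\prod_(i < d) xi ord0 i ^+ part2 l1 l2 i) * blin v j.
Proof.
move=> hxi; case: hv => _ hw _; case: (hw xi hxi) => h1 _.
by have := h1 j; rewrite glact_blin !gvec_diag.
Qed.

Lemma Uinv (s : K) y z : (1 < d)%N -> P (ushift s y) (ushift s z) = P y z.
Proof.
move=> h; case: hv => _ _ hu.
have [_ e] : beq (glact (Umat d s) v) v; last by have := e y z; rewrite glact_bpoly !gvec_U.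
apply: hu.
- move=> i j hji; rewrite mxE.
  have -> : (i == j) = false by apply/negbTE; rewrite neq_ltn hji orbT.
  case: (nat_of_ord i =P 0%N) => [e0|]; last by rewrite mulr0n add0r mul0r.
  by rewrite e0 ltn0 in hji.
- move=> i; rewrite mxE eqxx.
  by case: (nat_of_ord i =P 0%N) => [->|] //=; rewrite ?mul0r ?addr0.
Qed.

Lemma H1 (r a b c e : K) : r != 0 -> F (r * a) b (r * c) e = r ^+ l1 * F a b c e.
Proof.
move=> hr; set xi := \row_(i < d) (if nat_of_ord i == 0%N then r else 1).
have hxi : forall i, xi ord0 i != 0 by move=> i; rewrite mxE; case: ifP => _ //; exact: oner_neq0.
have hm : forall a b : K, dsc xi (mk a b) = mk (r * a) b.
  move=> a' b'; apply: functional_extensionality => j; rewrite /dsc /mk.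
  case: insubP => [j' _ <-|hj]; first by rewrite mxE; case: eqP => _; rewrite ?mul1r.
  have : j != 0%N by apply: contraNneq hj => ->.
  by move/negbTE => ->.
rewrite /F -!hm wt // (bigD1 (Ordinal hd)) //= mxE eqxx big1 ?mulr1 //.
move=> i hi; rewrite mxE.
have : nat_of_ord i != 0%N by apply: contra hi => /eqP hi0; apply/eqP/val_inj.
by move/negbTE => ->; rewrite expr1n.
Qed.

Lemma H2 (r a b c e : K) : r != 0 -> F a (r * b) c (r * e) = r ^+ l2 * F a b c e.
Proof.
move=> hr; case: (ltnP 1 d) => hd2; last first.
  have -> : l2 = 0%N by have := hpart hd2.
  rewrite expr0 mul1r; apply: P_ind => i hi; rewrite /mk;
    (case: (i =P 0%N) => // _; case: (i =P 1%N) => // ei; by move: (leq_trans hi hd2); rewrite ei).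
set xi := \row_(i < d) (if nat_of_ord i == 1%N then r else 1).
have hxi : forall i, xi ord0 i != 0 by move=> i; rewrite mxE; case: ifP => _ //; exact: oner_neq0.
have hm : forall a b : K, dsc xi (mk a b) = mk a (r * b).
  move=> a' b'; apply: functional_extensionality => j; rewrite /dsc /mk.
  case: insubP => [j' _ ej|hj].
    have ej' : nat_of_ord j' = j := ej; rewrite mxE ej'.
    by clear ej; case: j ej' => [|[|j]] ej' /=; rewrite ?mul1r ?mulr0.
  have : j != 1%N by apply: contraNneq hj => ->.
  by move/negbTE => ->.
rewrite /F -!hm wt // (bigD1 (Ordinal hd2)) //= mxE eqxx big1 ?mulr1 //.
move=> i hi; rewrite mxE.
have : nat_of_ord i != 1%N by apply: contra hi => /eqP hi0; apply/eqP/val_inj.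
by move/negbTE => ->; rewrite expr1n.
Qed.

Lemma H3 (s a b c e : K) : F a (b + s * a) c (e + s * c) = F a b c e.
Proof.
case: (ltnP 1 d) => hd2; last first.
  apply: P_ind => i hi; rewrite /mk;
    (case: (i =P 0%N) => // _; case: (i =P 1%N) => // ei; by move: (leq_trans hi hd2); rewrite ei).
rewrite /F -[RHS](Uinv s _ _ hd2); congr P; apply: functional_extensionality => j;
  rewrite /ushift /mk; case: eqP => [->|] //= _; by case: eqP.
Qed.

Lemma Reduce y z : P y z = F (y 0%N) (y 1%N) (z 0%N) (z 1%N).
Proof.
pose A (w : nat -> K) := fun j => if (j < 2)%N || (d <= j)%N then w j else 0.
pose B (w : nat -> K) := fun j => if (j < 2)%N || (d <= j)%N then 0 else w j.
have [p hp] := bpoly_line v (A y) (B y) (A z) (B z).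
have key : forall r, r != 0 -> p.[r] = P y z.
  move=> r hr; set xi := \row_(i < d) (if (nat_of_ord i < 2)%N then 1 else r).
  have hxi : forall i, xi ord0 i != 0 by move=> i; rewrite mxE; case: ifP => _ //; exact: oner_neq0.
  have hl : forall w, dsc xi w = line (A w) (B w) r.
    move=> w; apply: functional_extensionality => j; rewrite /dsc /line /A /B.
    case: insubP => [j' _ ej|hj].
      have ej' : nat_of_ord j' = j := ej.
      have hjd : (j < d)%N by rewrite -ej'.
      rewrite mxE ej' (leqNgt d j) hjd orbF; case: ifP => _; by rewrite ?mul1r ?mulr0 ?addr0 ?add0r.
    have hdj : (d <= j)%N by rewrite leqNgt.
    by rewrite hdj orbT mulr0 addr0.
  rewrite -hp -!hl -[bpoly v _ _]/(P _ _) wt // big1 ?mul1r // => i _; rewrite mxE; case: ifP => h.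
    by rewrite expr1n.
  by rewrite /part2 nth_default ?expr0 //= leqNgt h.
have e : p = (P y z)%:P by apply: (poly_nz_eq Kc) => r hr; rewrite key // hornerC.
have h0 : p.[0] = P y z by rewrite e hornerC.
rewrite -h0 -hp /F -[bpoly v _ _]/(P _ _); apply: P_ind => i hi;
  rewrite /line /A /mk mul0r addr0 (leqNgt d i) hi orbF;
  by case: i hi => [|[|i]] hi.
Qed.


Lemma Fline (a b c e a' b' c' e' : K) : exists p : {poly K}, forall x,
  F (a + x * a') (b + x * b') (c + x * c') (e + x * e') = p.[x].
Proof.
have [p hp] := bpoly_line v (mk a b) (mk a' b') (mk c e) (mk c' e').
exists p => x; rewrite -hp /F /P; congr bpoly; apply: functional_extensionality => i;
  rewrite /line /mk; case: eqP => _ //; case: eqP => _ //; by rewrite mulr0 addr0.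
Qed.

Lemma scale_all (r a b c e : K) : r != 0 ->
  F (r * a) (r * b) (r * c) (r * e) = r ^+ (l1 + l2) * F a b c e.
Proof. by move=> hr; rewrite H1 // H2 // exprD mulrA. Qed.

Lemma Fscale_zero k : (k <= 1)%N ->
  (forall (r a b c e : K), r != 0 -> F (r * a) (r * b) (r * c) (r * e) = r ^+ k * F a b c e) ->
  forall a b c e : K, F a b c e = 0.
Proof.
move=> hk hs a b c e.
have [p hp] := bpoly_scale2 v (mk a b) (mk c e).
have key : forall r, r != 0 -> (F a b c e)%:P.[r] = ('X^(2 - k) * p).[r].
  move=> r hr; rewrite hornerC hornerM hornerXn.
  have := hs r a b c e hr.
  have -> : F (r * a) (r * b) (r * c) (r * e) = r ^+ 2 * p.[r].
    rewrite -hp /F /P; congr bpoly; apply: functional_extensionality => i;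
      rewrite /mk; case: eqP => _ //; case: eqP => _ //; by rewrite mulr0.
  have -> : r ^+ 2 = r ^+ k * r ^+ (2 - k) by rewrite -exprD subnKC // (leq_trans hk).
  rewrite -mulrA => /mulfI -> //; by apply: expf_neq0.
have := poly_nz_eq Kc key => /(congr1 (fun q => q.[0])).
rewrite hornerC hornerM hornerXn expr0n /=.
have -> : (2 - k == 0)%N = false by apply/negbTE; rewrite subn_eq0 -ltnNge ltnS.
by rewrite mul0r.
Qed.

Definition ind j : nat -> K := fun k => (k == j)%:R.

Lemma blin_single (k j : nat) (r : K) (hk : (k < d)%N) : (j < d)%N -> r != 0 ->
  (if j == k then r else 1) * blin v j = r ^+ part2 l1 l2 k * blin v j.
Proof.
move=> hj hr; set xi := \row_(i < d) (if nat_of_ord i == k then r else 1).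
have hxi : forall i, xi ord0 i != 0 by move=> i; rewrite mxE; case: ifP => _ //; exact: oner_neq0.
have := wt_blin j hxi.
have -> : dsc xi (ind j) = (fun i => (if j == k then r else 1) * ind j i).
  apply: functional_extensionality => i; rewrite /dsc /ind.
  case: insubP => [i' _ ei|hi].
    have ei' : nat_of_ord i' = i := ei; rewrite mxE ei'.
    by case: (eqVneq i j) => [->|]; rewrite ?mulr1 ?mulr0.
  have : (i == j) = false.
    by apply/negbTE; apply: contraNneq hi => ->.
  by move=> ->; rewrite mulr0.
rewrite blinvZ -blin_blinv => ->; congr (_ * _).
rewrite (bigD1 (Ordinal hk)) //= mxE eqxx big1 ?mulr1 //.
move=> i hi; rewrite mxE.
have : nat_of_ord i != k by apply: contra hi => /eqP hi0; apply/eqP/val_inj.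
by move/negbTE => ->; rewrite expr1n.
Qed.

Lemma pow2_cases (c : K) k : c != 0 -> (c = 2 ^+ k * c -> k = 0%N) /\ (2 * c = 2 ^+ k * c -> k = 1%N).
Proof.
move=> hc; split.
- move=> h; have : (1 : K) = 2 ^+ k by apply: (mulIf hc); rewrite mul1r.
  clear h; rewrite -[2]/(2%:R) -natrX -[1]/(1%:R) => /(natK_inj Kc).
  by case: k => // k; rewrite expnS; lia.
- move=> h; have : (2 : K) = 2 ^+ k by apply: (mulIf hc).
  clear h; rewrite -[2]/(2%:R) -natrX => /(natK_inj Kc).
  by case: k => [|[|k]] //; rewrite !expnS; lia.
Qed.

Definition Dl y z : K := y 0%N * z 1%N - y 1%N * z 0%N.

Variable f : bterm K.
Hypothesis hTv : Tideal f v.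
Hypothesis hl : (l2 <= l1)%N.

Lemma caseB j : blin v j != 0 -> in_Tideal_poly f (fun y z => Dl y z ^+ l1).
Proof.
move=> hbj.
have hjd : (j < d)%N by rewrite ltnNge; apply: contra hbj => h; rewrite blin_v_out.
have hlj : part2 l1 l2 j = 1%N.
  have := blin_single hjd hjd (two_neq0 Kc); rewrite eqxx.
  by move/(proj2 (pow2_cases _ hbj)).
have hj0 : forall j', j' != 0%N -> blin v j' = 0.
  move=> j' hj'; apply: NNPP => hb; move/eqP: hb => hb.
  have hj'd : (j' < d)%N by rewrite ltnNge; apply: contra hb => h; rewrite blin_v_out.
  have := blin_single hd hj'd (two_neq0 Kc); rewrite (negbTE hj') mul1r.
  move/(proj1 (pow2_cases _ hb)) => e0; rewrite /part2 /= in e0.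
  have e2 : l2 = 0%N by move: hl; rewrite e0; case: l2.
  by move: hlj; rewrite /part2 e0 e2; case: (j) => [|[|jj]] /=; rewrite ?nth_nil.
have j0 : j = 0%N by apply: NNPP => hj; move/eqP: hj => hj; move: hbj; rewrite hj0 ?eqxx.
have l11 : l1 = 1%N by move: hlj; rewrite j0.
have l20 : l2 = 0%N.
  case: (ltnP 1 d) => hd2; last by have := hpart hd2.
  have hb0 : blin v 0 != 0 by rewrite -j0.
  have := blin_single hd2 hd (two_neq0 Kc); rewrite mul1r.
  by move/(proj1 (pow2_cases _ hb0)).
have hF0 : forall a b c e : K, F a b c e = 0.
  apply: (Fscale_zero (k := 1%N)) => // r a b c e hr; by rewrite scale_all // l11 l20.
have hP0 : forall y z, bpoly v y z = 0 by move=> y z; rewrite -/(P y z) Reduce hF0.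
set a0 := blin v 0.
have ha0 : a0 != 0 by rewrite /a0 -j0.
have hlv : forall w, blinv v w = a0 * w 0%N.
  move=> w; rewrite (@blinv_sum _ v (bmax v).+1) // (bigD1 ord0) //= big1 ?addr0 //.
  move=> i hi; rewrite hj0 ?mul0r //; by rewrite -(inj_eq val_inj) in hi.
set t := tAdd (tMul v (tVar 1%N)) (tScale (-1) (tMul (tVar 1%N) v)).
have hI : in_Tideal_poly f (fun y z => a0 * Dl y z).
  exists t; split.
  - by apply: TI_add; [apply: TI_mulr | apply: TI_scale; apply: TI_mull].
  - by move=> i /=; rewrite mulr0 addr0.
  - by move=> y z /=; rewrite !hlv !hP0 /Dl; ring.
apply: I_ext (I_scale a0^-1 hI) => y z.
by rewrite l11 expr1 mulrA mulVf // mul1r.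
Qed.

Definition sig (m : nat) (i : nat) : bterm K :=
  if i == 0%N then tAdd (tVar 0%N) (tScale m%:R (tVar 1%N)) else tVar i.

Definition Sm m := bsubst (sig m) v.

Lemma Sm_poly m y z : bpoly (Sm m) y z = F (y 0%N + m%:R * y 1%N) (y 1%N) (z 0%N + m%:R * z 1%N) (z 1%N).
Proof.
rewrite /Sm bpoly_lsubst; last by move=> i y' z'; rewrite /sig; case: eqP => _ //=; rewrite mulr0 addr0.
by rewrite -/(P _ _) Reduce /sig /=.
Qed.

Lemma islin_e1 L y z : islin L -> polyfun (fun r => L y (line z (ind 1%N) r)).
Proof.
move=> [A [B [C [E hL]]]].
apply: pf_ext (pf_lin (A * y 0%N + B * y 1%N + C * z 0%N + E * z 1%N) E) => r.
by rewrite hL /line /ind /=; ring.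
Qed.

Lemma caseA : (forall j, blin v j = 0) -> in_Tideal_poly f (fun y z => Dl y z ^+ l1).
Proof.
move=> hA.
have hv0 : ~ beq v tZero by case: hv.
have hl1 : (0 < l1)%N.
  rewrite lt0n; apply/negP => /eqP e0; apply: hv0; split => [j|y z]; first by rewrite hA.
  have e2 : l2 = 0%N by move: hl; rewrite e0; case: l2.
  have hF0 : forall a b c e : K, F a b c e = 0.
    apply: (Fscale_zero (k := 0%N)) => // r a b c e hr; by rewrite scale_all // e0 e2.
  by rewrite -/(P y z) Reduce hF0.
have [y0 [z0 hyz]] : exists y z, bpoly v y z != 0.
  apply: NNPP => hn; apply: hv0; split => [j|y z]; first by rewrite hA.
  by rewrite /=; apply/eqP; apply: NNPP => hn'; apply: hn; exists y, z; apply/negP.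
rewrite -/(P _ _) Reduce in hyz.
have [p [q [hp hk]]] := nonvan Kc (@H2) (@H3) Fline hyz.
set n := (l1 - l2)%N.
set kap := (-1) ^+ (l1 + l2) * F p 0 q p^-1.
have hkap : kap != 0 by rewrite mulf_neq0 // expf_neq0 // oppr_eq0 oner_eq0.
pose lf m j (y z : nat -> K) := ((z 0%N * p - y 0%N * q) - j%:R * (y 1%N * q - z 1%N * p)) / (m%:R - j%:R).
have hlin : forall m j, islin (lf m j).
  move=> m j; exists (- q * (m%:R - j%:R)^-1), (- (j%:R * q) * (m%:R - j%:R)^-1),
    (p * (m%:R - j%:R)^-1), (j%:R * p * (m%:R - j%:R)^-1) => y z; rewrite /lf; ring.
pose LHS y z := \sum_(m <- iota 0 n.+1) (\prod_(j <- iota 0 n.+1 | j != m) lf m j y z) * bpoly (Sm m) y z.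
have hI : in_Tideal_poly f LHS.
  apply: I_sum => m _; apply: I_prod => //; apply: I_term.
  - exact: Tideal_subst.
  - by move=> j; rewrite blin_blinv /Sm blinv_subst blinv_zero.
have hD : forall y z, y 1%N * q - z 1%N * p != 0 -> LHS y z = kap * Dl y z ^+ l1.
  move=> y z hD; rewrite /LHS.
  under eq_bigr => m _ do rewrite Sm_poly.
  rewrite /lf (main_id Kc hl hl1 (@H1) (@H2) (@H3) Fline (y 0%N) (z 0%N) hp hD).
  by rewrite /kap /Dl.
have hall : forall y z, LHS y z = kap * Dl y z ^+ l1.
  move=> y z; case: (eqVneq (y 1%N * q - z 1%N * p) 0) => [h0|]; last exact: hD.
  have hpf : polyfun (fun r => LHS y (line z (ind 1%N) r) - kap * Dl y (line z (ind 1%N) r) ^+ l1).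
    apply: pf_add; last first.
      apply: pf_ext (pf_mul (pf_const (- kap)) (pf_exp l1 (pf_lin (Dl y z) (y 0%N)))) => r.
      by rewrite /Dl /line /ind /= mulNr; congr (- (_ * _ ^+ _)); ring.
    apply: pf_sum => m; apply: pf_mul.
      by apply: pf_prod => j; apply: islin_e1.
    have [pm hpm] := bpoly_line (Sm m) y (fun _ => 0) z (ind 1%N).
    exists pm => r; rewrite -hpm; congr bpoly; apply: functional_extensionality => i.
    by rewrite /line mulr0 addr0.
  case: hpf => ph hph.
  have : ph = 0.
    apply: (poly_nz_eq Kc) => r hr; rewrite horner0 -hph hD ?subrr //.
    have -> : y 1%N * q - line z (ind 1%N) r 1%N * p = - (r * p).
      by move: h0; rewrite /line /ind /= => /eqP; rewrite subr_eq0 => /eqP ->; ring.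
    by rewrite oppr_eq0 mulf_neq0.
  move=> e0; have := hph 0; rewrite e0 horner0.
  have -> : line z (ind 1%N) 0 = z by apply: functional_extensionality => i; rewrite /line mul0r addr0.
  by move/eqP; rewrite subr_eq0 => /eqP.
apply: I_ext (I_scale kap^-1 (I_ext hall hI)) => y z.
by rewrite mulrA mulVf // mul1r.
Qed.

End HW.

End Main.

Lemma bpoly_zero (K : fieldType) (t : bterm K) : bpoly t (fun _ => 0) (fun _ => 0) = 0.
Proof.
elim: t => //= [a -> b ->|c a ->|a -> b ->]; by rewrite ?addr0 ?mulr0 ?blinv0 ?mul0r.
Qed.

Section Fin.
Variable K : fieldType.
Variable f : bterm K.
Notation I := (in_Tideal_poly f).

Lemma I_powy k Q : I Q -> I (fun y z => y 0%N ^+ k * Q y z).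
Proof.
move=> h; elim: k => [|k IH]; first by apply: I_ext h => y z; rewrite expr0 mul1r.
by apply: I_ext (I_muly 0 IH) => y z; rewrite exprS mulrA.
Qed.

Lemma I_powz k Q : I Q -> I (fun y z => z 0%N ^+ k * Q y z).
Proof.
move=> h; elim: k => [|k IH]; first by apply: I_ext h => y z; rewrite expr0 mul1r.
by apply: I_ext (I_mulz 0 IH) => y z; rewrite exprS mulrA.
Qed.

Lemma I_powD k Q : I Q -> I (fun y z => (y 0%N * z 1%N - y 1%N * z 0%N) ^+ k * Q y z).
Proof.
move=> h; elim: k => [|k IH]; first by apply: I_ext h => y z; rewrite expr0 mul1r.
have := I_add (I_muly 0 (I_mulz 1 IH)) (I_scale (-1) (I_muly 1 (I_mulz 0 IH))).
by apply: I_ext => y z; rewrite exprS; ring.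
Qed.

End Fin.

Theorem lemma4p2 (K : fieldType) (Kchar0 : [pchar K] =i pred0)
  (d : nat) (M : bterm K -> Prop) (l1 l2 : nat) (hl : (l2 <= l1)%N)
  (hM : iso_W d M l1 l2) (f : bterm K) (hf : M f) (hf0 : ~ beq f tZero) :
  (forall m1 m2 j : nat, (m2 <= m1)%N -> (0 < m2)%N -> (l1 <= m2)%N ->
     (j <= m1 - m2)%N -> in_Tideal_poly f (wmu m1 m2 j))
  /\ in_Tideal_poly f (fun y z => (y 0%N * z 1%N - y 1%N * z 0%N) ^+ l1).
Proof.
case: hM => [[hsub hne hirr] hpart [v [hMv hv]]].
case: hsub => hbeq hz hadd hscale [hFd hgl].
pose N t := M t /\ Tideal f t.
have hN : GLsubmodule d N.
  split.
  - by move=> t s [h1 h2] e; split; [apply: hbeq h1 e | apply: TI_eq h2 e].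
  - by split; [exact: hz | exact: TI_zero].
  - by move=> a b [h1 h2] [g1 g2]; split; [apply: hadd | apply: TI_add].
  - by move=> c a [h1 h2]; split; [apply: hscale | apply: TI_scale].
  - split; first by move=> t [h _]; apply: hFd.
    by move=> g t hg [h1 h2]; split; [apply: hgl | apply: Tideal_subst].
case: (hirr N hN (fun t h => proj1 h)) => [h0|hall].
  by exfalso; apply: hf0; apply: h0; split => //; exact: Tideal_self.
have hTv : Tideal f v by case: (hall v hMv).
have hFdv := hFd v hMv.
have hd : (0 < d)%N.
  rewrite lt0n; apply/negP => /eqP d0; case: hv => hv0 _ _; apply: hv0.
  case: hFdv => s [hs [e1 e2]]; rewrite d0 in hs; split => [j|y z].
    by rewrite -e1 (bvars_blin hs).
  rewrite -e2 /= (bvars_bpoly (y' := fun _ => 0) (z' := fun _ => 0) hs) //.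
  exact: bpoly_zero.
have key : in_Tideal_poly f (fun y z => Dl y z ^+ l1).
  case: (classic (exists j, blin v j != 0)) => [[j hj]|hn].
    exact: (caseB Kchar0 hpart hv hFdv hd hTv hl hj).
  apply: (caseA Kchar0 hpart hv hFdv hd hTv hl) => j.
  by apply/eqP; apply: NNPP => h; apply: hn; exists j; apply/negP.
split; last by apply: I_ext key => y z.
move=> m1 m2 j h21 h2p hlm hj.
have := I_powy j (I_powz (m1 - m2 - j) (I_powD (m2 - l1) key)).
apply: I_ext => y z; rewrite /wmu /Dl.
rewrite mulrA -exprD subnK //; ring.
Qed.
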